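(* Let $p>1$, $q=\frac{p}{p-1}$ and $0<a<b$. Then $$\left|\frac{I(a,b)}{G(a,b)}\right|\le \exp\!\left(\frac{b-a}{2}\,\bigl(H(|a|^q,|b|^q)\bigr)^{-1/q}\right).$$
   Context: For positive $x,y$: the geometric mean is $G(x,y)=\sqrt{xy}$; the harmonic mean is $H(x,y)=\frac{2xy}{x+y}$; the identric mean is $I(x,y)=x$ if $x=y$ and $I(x,y)=\frac1e\left(\frac{y^y}{x^x}\right)^{\frac{1}{y-x}}$ if $x\ne y$. *)

(* Defs.v *)
From Stdlib Require Import Reals.
Open Scope R_scope.

Definition Gmean (x y : R) : R := sqrt (x * y).

Definition Hmean (x y : R) : R := 2 * x * y / (x + y).

Definition Imean (x y : R) : R :=
  if Req_EM_T x y then x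
  else / exp 1 * Rpower (Rpower y y / Rpower x x) (1 / (y - x)).

(* Main.v *)
Require Import Defs.
From Stdlib Require Import Reals Lra Psatz.
Open Scope R_scope.

Lemma Rle_div_l a b c : 0 < c -> a <= b * c -> a / c <= b.
Proof. intros Hc H. apply (Rmult_le_reg_r c); auto. unfold Rdiv. rewrite Rmult_assoc, Rinv_l by lra. lra. Qed.

Lemma Rle_div_r c a b : 0 < c -> a * c <= b -> a <= b / c.
Proof. intros Hc H. apply (Rmult_le_reg_r c); auto. unfold Rdiv. rewrite Rmult_assoc, Rinv_l by lra. lra. Qed.

Lemma exp_le_m x y : x <= y -> exp x <= exp y.
Proof. intros [H|H]; [left; apply exp_increasing; auto | subst; lra]. Qed.

Lemma ln_le_m x y : 0 < x -> x <= y -> ln x <= ln y.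
Proof. intros Hx [H|H]; [left; apply ln_increasing; auto | subst; lra]. Qed.

Lemma ln_le_xm1 x : 0 < x -> ln x <= x - 1.
Proof. intros Hx. pose proof (exp_ineq1_le (ln x)). rewrite exp_ln in H; lra. Qed.

Lemma rhs_bound q a b : 1 <= q -> 0 < a -> 0 < b ->
  / (2 * a) <= Rpower (Hmean (Rpower (Rabs a) q) (Rpower (Rabs b) q)) (- (1 / q)).
Proof.
  intros Hq Ha Hb.
  rewrite (Rabs_right a) by lra. rewrite (Rabs_right b) by lra.
  set (A := Rpower a q). set (B := Rpower b q).
  assert (HA : 0 < A) by apply exp_pos.
  assert (HB : 0 < B) by apply exp_pos.
  assert (HH : 0 < Hmean A B).
  { unfold Hmean. apply Rdiv_lt_0_compat; nra. }
  assert (HH2 : Hmean A B <= 2 * A).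
  { unfold Hmean. apply Rle_div_l; nra. }
  assert (lnA : ln A = q * ln a) by (unfold A; apply ln_Rpower).
  assert (l2 : 0 < ln 2) by (pose proof ln_lt_2; lra).
  assert (HL : ln (Hmean A B) <= q * (ln 2 + ln a)).
  { eapply Rle_trans. apply ln_le_m; eauto. rewrite ln_mult by lra. nra. }
  replace (/ (2 * a)) with (exp (- (ln 2 + ln a))).
  2:{ rewrite exp_Ropp, exp_plus, !exp_ln by lra. reflexivity. }
  unfold Rpower. apply exp_le_m.
  assert (0 < / q) by (apply Rinv_0_lt_compat; lra).
  assert (/ q * ln (Hmean A B) <= /q * (q * (ln 2 + ln a))) by (apply Rmult_le_compat_l; lra).
  replace (/ q * (q * (ln 2 + ln a))) with (ln 2 + ln a) in H0 by (field; lra).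
  unfold Rdiv. lra.
Qed.

Theorem proposition2 (p q a b : R) :
  1 < p -> q = p / (p - 1) -> 0 < a -> a < b ->
  Rabs (Imean a b / Gmean a b) <=
  exp ((b - a) / 2 *
       Rpower (Hmean (Rpower (Rabs a) q) (Rpower (Rabs b) q)) (- (1 / q))).
Proof.
  intros Hp Hq Ha Hab.
  assert (Hq1 : 1 <= q).
  { subst q. apply Rle_div_r; lra. }
  pose proof (rhs_bound q a b Hq1 Ha ltac:(lra)) as HR.
  set (s := sqrt a). set (t := sqrt b).
  assert (Hs : 0 < s) by (apply sqrt_lt_R0; lra).
  assert (Ht : 0 < t) by (apply sqrt_lt_R0; lra).
  assert (ea : a = s * s) by (symmetry; apply sqrt_sqrt; lra).
  assert (eb : b = t * t) by (symmetry; apply sqrt_sqrt; lra).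
  assert (Hst : s < t) by (destruct (Rlt_or_le s t); [auto| nra]).
  assert (la : ln a = 2 * ln s) by (rewrite ea, ln_mult; lra).
  assert (lb : ln b = 2 * ln t) by (rewrite eb, ln_mult; lra).
  assert (eG : Gmean a b = exp (ln s + ln t)).
  { unfold Gmean. rewrite sqrt_mult by lra. fold s t.
    rewrite exp_plus, !exp_ln; lra. }
  set (E := -1 + 1 / (b - a) * (b * ln b - a * ln a) - (ln s + ln t)).
  assert (eI : Imean a b / Gmean a b = exp E).
  { unfold Imean. destruct (Req_EM_T a b); [lra|].
    rewrite eG. unfold Rpower.
    replace (exp (b * ln b) / exp (a * ln a)) with (exp (b * ln b - a * ln a)).
    2:{ unfold Rminus. rewrite exp_plus, exp_Ropp. reflexivity. }
    rewrite ln_exp. unfold E, Rminus. rewrite !exp_plus, !exp_Ropp, exp_plus.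
    pose proof (exp_pos 1). pose proof (exp_pos (ln s)). pose proof (exp_pos (ln t)).
    replace (exp (-1)) with (/ exp 1) by (rewrite <- exp_Ropp; f_equal; lra).
    field; lra. }
  rewrite eI, Rabs_right by (left; apply exp_pos).
  apply exp_le_m.
  set (x := ln t - ln s).
  assert (Hx : x <= t / s - 1).
  { unfold x. replace (ln t - ln s) with (ln (t * / s)) by (rewrite ln_mult, ln_Rinv; try lra; apply Rinv_0_lt_compat; lra). apply ln_le_xm1. apply Rdiv_lt_0_compat; lra. }
  assert (eE : E = x * (s*s + t*t) / (t*t - s*s) - 1).
  { unfold E, x. rewrite la, lb, ea, eb. field. nra. }
  assert (E <= (t*t - s*s) / (4 * (s*s))).
  { rewrite eE.
    assert (x * (s*s + t*t) / (t*t - s*s) <= (t/s - 1) * (s*s + t*t) / (t*t - s*s)).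
    { unfold Rdiv. apply Rmult_le_compat_r.
      - left; apply Rinv_0_lt_compat; nra.
      - apply Rmult_le_compat_r; nra. }
    assert ((t/s - 1) * (s*s + t*t) / (t*t - s*s) - 1 = t*(t-s)/(s*(s+t))) by (field; nra).
    assert (t*(t-s)/(s*(s+t)) <= (t*t - s*s) / (4 * (s*s))).
    { apply Rle_div_l; [nra|]. unfold Rdiv.
      replace ((t * t - s * s) * / (4 * (s * s)) * (s * (s + t)))
        with ((t - s) * (s + t) * (s + t) / (4 * s)) by (field; lra).
      apply Rle_div_r; [lra|]. assert (0 <= (t-s)*((t-s)*(t-s))) by (apply Rmult_le_pos; nra). nra. }
    lra. }
  assert ((b - a) / 2 * / (2 * a) <= (b - a) / 2 * Rpower (Hmean (Rpower (Rabs a) q) (Rpower (Rabs b) q)) (- (1 / q))).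
  { apply Rmult_le_compat_l; lra. }
  replace ((b - a) / 2 * / (2 * a)) with ((t*t - s*s) / (4 * (s*s))) in H0
    by (rewrite ea, eb; field; lra).
  lra.
Qed.
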